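(* Let $X$ be a random variable with distribution $P$ on $\mathbb{Z}_+=\{0,1,2,\dots\}$ and mean $E(X)=\lambda>0$. Suppose that either $P(k)>0$ for all $k\in\mathbb{Z}_+$, or there is $N\in\mathbb{Z}_+$ with $P(k)=0$ for all $k>N$. Then $$D(P\,\|\,\mathrm{Po}(\lambda))\le K(X).$$
   Context: For a random variable $X$ with distribution $P$ on $\mathbb{Z}_+$ and mean $\lambda>0$, the scaled score function is $\rho_X(x)=\frac{(x+1)P(x+1)}{\lambda P(x)}-1$ and the scaled Fisher information is $K(X)=\lambda E[\rho_X(X)^2]$, i.e. $K(X)=\lambda\sum_{x\ge0}\frac{\big(\frac{(x+1)P(x+1)}{\lambda}-P(x)\big)^2}{P(x)}$, with the conventions $0/0=0$ and $c/0=\infty$ for $c>0$. $\mathrm{Po}(\lambda)$ is the Poisson distribution with mean $\lambda$, and $D(P\|Q)=\sum_x P(x)\log\frac{P(x)}{Q(x)}$ is the relative entropy (natural logarithm, conventions $0\log(0/a)=0$, $a\log(a/0)=\infty$). *)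

(* Defs.v *)
From Stdlib Require Import Reals.
From Coquelicot Require Import Coquelicot.
Open Scope R_scope.

Definition poisson_pmf (lam : R) (x : nat) : R :=
  exp (- lam) * lam ^ x / INR (Stdlib.Arith.Factorial.fact x).

(* Since Stdlib's [ln] is 0
   on nonpositive arguments, a term with P x = 0 equals 0 (convention 0 log 0 = 0);
   Po(lam)(x) > 0 always, so no infinite terms occur. *)
Definition kl_term (P : nat -> R) (lam : R) (x : nat) : R :=
  P x * ln (P x / poisson_pmf lam x).

Definition fisher_num (P : nat -> R) (lam : R) (x : nat) : R :=
  INR (S x) * P (S x) / lam - P x.

(* [scaled_fisher_is P lam K]: the scaled Fisher information K(X) is finite and
   equals K.  Finiteness requires no term of the form c/0 with c > 0, i.e.
   P x = 0 -> fisher_num P lam x = 0; such a term is then 0/0 = 0, which is what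
   Stdlib's total division gives (c^2 * /0 = 0). *)
Definition scaled_fisher_is (P : nat -> R) (lam K : R) : Prop :=
  (forall x, P x = 0 -> fisher_num P lam x = 0) /\
  is_series (fun x => lam * (fisher_num P lam x ^ 2 / P x)) K.

(* Main.v *)
From Stdlib Require Import Reals Lra Lia Psatz ZArith.
From Coquelicot Require Import Coquelicot.
Require Import Defs.
Open Scope R_scope.

Fixpoint En (p : R) (n : nat) (h : nat -> R) : R :=
  match n with
  | O => h O
  | S m => En p m (fun x => (1 - p) * h x + p * h (S x))
  end.

Lemma En_ext p n : forall h1 h2, (forall x, h1 x = h2 x) -> En p n h1 = En p n h2.
Proof.
  induction n as [|n IH]; intros h1 h2 H; simpl.
  - apply H.
  - apply IH. intro x. rewrite !H. reflexivity.
Qed.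

Lemma En_lin p n : forall a b h1 h2,
  En p n (fun x => a * h1 x + b * h2 x) = a * En p n h1 + b * En p n h2.
Proof.
  induction n as [|n IH]; intros a b h1 h2; simpl.
  - reflexivity.
  - rewrite <- IH. apply En_ext. intro x. ring.
Qed.

Lemma En_const p n : forall c, En p n (fun _ => c) = c.
Proof.
  induction n as [|n IH]; intros c; simpl.
  - reflexivity.
  - rewrite (En_ext p n _ (fun _ => c)). apply IH. intro; ring.
Qed.

Lemma En_mono p n : 0 <= p <= 1 -> forall h1 h2, (forall x, h1 x <= h2 x) -> En p n h1 <= En p n h2.
Proof.
  intros Hp. induction n as [|n IH]; intros h1 h2 H; simpl.
  - apply H.
  - apply IH. intro x. specialize (H x) as H1. specialize (H (S x)) as H2. nra.
Qed.

Definition E2 (p a b : R) : R :=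
  (1 - p) * (a * ln a) + p * (b * ln b)
  - ((1 - p) * a + p * b) * ln ((1 - p) * a + p * b).

Definition Ent (p : R) (n : nat) (f : nat -> R) : R :=
  En p n (fun x => f x * ln (f x)) - En p n f * ln (En p n f).

Lemma Ent_chain p n f :
  Ent p (S n) f = En p n (fun x => E2 p (f x) (f (S x)))
    + Ent p n (fun x => (1 - p) * f x + p * f (S x)).
Proof.
  set (g := fun x => (1 - p) * f x + p * f (S x)).
  set (F := fun x => (1 - p) * (f x * ln (f x)) + p * (f (S x) * ln (f (S x)))).
  change (Ent p (S n) f) with (En p n F - En p n g * ln (En p n g)).
  unfold Ent.
  rewrite (En_ext p n (fun x => E2 p (f x) (f (S x)))
   (fun x => 1 * F x + (-1) * (g x * ln (g x)))).
  2:{ intro; unfold g, F, E2; cbv beta. ring. }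
  rewrite En_lin. ring.
Qed.

Lemma xlnx_le x m : 0 <= x -> 0 < m -> x * ln x - x * ln m <= x * (x / m - 1).
Proof.
  intros Hx Hm. destruct (Req_dec x 0) as [->|Hx0].
  - lra.
  - assert (0 < x) by lra.
    assert (H1 : ln (x / m) <= x / m - 1).
    { pose proof (exp_ineq1_le (ln (x/m))) as H1. rewrite exp_ln in H1.
      lra. apply Rdiv_lt_0_compat; lra. }
    unfold Rdiv in H1. rewrite ln_mult, ln_Rinv in H1 by (try apply Rinv_0_lt_compat; lra).
    unfold Rdiv. nra.
Qed.

Lemma E2_le p a b : 0 < p < 1 -> 0 < a -> 0 <= b -> E2 p a b <= p * ((b - a) ^ 2 / a).
Proof.
  intros Hp Ha Hb. unfold E2.
  set (m := (1 - p) * a + p * b).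
  assert (Hm : 0 < m) by (unfold m; nra).
  pose proof (xlnx_le a m ltac:(lra) Hm) as H1.
  pose proof (xlnx_le b m Hb Hm) as H2.
  assert (E : (1 - p) * (a * ln a) + p * (b * ln b) - m * ln m =
     (1 - p) * (a * ln a - a * ln m) + p * (b * ln b - b * ln m)) by (unfold m; ring).
  rewrite E.
  assert (Hq : 0 < 1 - p) by lra.
  apply Rle_trans with ((1 - p) * (a * (a / m - 1)) + p * (b * (b / m - 1))).
  { apply Rplus_le_compat; apply Rmult_le_compat_l; lra. }
  assert (E2 : (1 - p) * (a * (a / m - 1)) + p * (b * (b / m - 1)) = p * (1 - p) * (b - a) ^ 2 / m).
  { unfold m in *. field. lra. }
  rewrite E2.
  replace (p * (1 - p) * (b - a) ^ 2 / m) with ((p * (b - a) ^ 2) * ((1 - p) / m)) by (field; lra).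
  replace (p * ((b - a) ^ 2 / a)) with ((p * (b - a) ^ 2) * (/ a)) by (field; lra).
  apply Rmult_le_compat_l. apply Rmult_le_pos; [lra|apply pow2_ge_0].
  apply Rmult_le_reg_l with (m * a). nra.
  replace (m * a * ((1 - p) / m)) with ((1-p) * a) by (field; lra).
  replace (m * a * / a) with m by (field; lra).
  unfold m. nra.
Qed.

Definition If (f : nat -> R) (x : nat) : R := (f (S x) - f x) ^ 2 / f x.
Definition goodf (f : nat -> R) : Prop :=
  (forall x, 0 <= f x) /\ (forall x, f x = 0 -> f (S x) = 0).

Lemma sq_div_nonneg u v : 0 <= v -> 0 <= u ^ 2 / v.
Proof.
  intros Hv. destruct (Req_dec v 0) as [->|H].
  - unfold Rdiv. rewrite Rinv_0. lra.
  - apply Rmult_le_pos. apply pow2_ge_0. left. apply Rinv_0_lt_compat. lra.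
Qed.

Lemma If_nonneg f x : goodf f -> 0 <= If f x.
Proof. intros [H _]. apply sq_div_nonneg, H. Qed.

Lemma cs_convex q p u1 v1 u2 v2 : 0 < q -> 0 < p -> 0 < v1 -> 0 < v2 ->
  (q * u1 + p * u2) ^ 2 / (q * v1 + p * v2) <= q * (u1 ^ 2 / v1) + p * (u2 ^ 2 / v2).
Proof.
  intros Hq Hp H1 H2.
  set (s := u1 / v1). set (t := u2 / v2).
  replace u1 with (s * v1) by (unfold s; field; lra).
  replace u2 with (t * v2) by (unfold t; field; lra).
  replace ((s * v1) ^ 2 / v1) with (s ^ 2 * v1) by (field; lra).
  replace ((t * v2) ^ 2 / v2) with (t ^ 2 * v2) by (field; lra).
  assert (Hw : 0 < q * v1 + p * v2) by nra.
  apply Rmult_le_reg_l with (q * v1 + p * v2). lra.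
  replace ((q * v1 + p * v2) * ((q * (s * v1) + p * (t * v2)) ^ 2 / (q * v1 + p * v2)))
    with ((q * (s * v1) + p * (t * v2)) ^ 2) by (field; lra).
  assert (0 <= q * p * v1 * v2 * (s - t) ^ 2).
  { apply Rmult_le_pos. repeat apply Rmult_le_pos; lra. apply pow2_ge_0. }
  nra.
Qed.

Lemma If_convex p f x : 0 < p < 1 -> goodf f ->
  If (fun y => (1 - p) * f y + p * f (S y)) x <= (1 - p) * If f x + p * If f (S x).
Proof.
  intros Hp [Hnn Hz]. unfold If.
  destruct (Req_dec (f x) 0) as [E0|N0].
  - assert (E1 := Hz _ E0). assert (E2 := Hz _ E1).
    rewrite E0, E1, E2. unfold Rdiv. rewrite !Rmult_0_r, Rplus_0_r, Rinv_0. simpl. lra.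
  - assert (P0 : 0 < f x) by (specialize (Hnn x); lra).
    destruct (Req_dec (f (S x)) 0) as [E1|N1].
    + assert (E2 := Hz _ E1). rewrite E1, E2.
      replace ((1 - p) * 0 + p * 0 - ((1 - p) * f x + p * 0)) with ((1-p) * (0 - f x)) by ring.
      replace ((1 - p) * f x + p * 0) with ((1-p) * f x) by ring.
      unfold Rdiv. rewrite Rinv_0. right. field. lra.

    + assert (P1 : 0 < f (S x)) by (specialize (Hnn (S x)); lra).
      replace ((1 - p) * f (S x) + p * f (S (S x)) - ((1 - p) * f x + p * f (S x)))
        with ((1 - p) * (f (S x) - f x) + p * (f (S (S x)) - f (S x))) by ring.
      apply cs_convex; lra.
Qed.

Lemma good_step p f : 0 < p < 1 -> goodf f -> goodf (fun y => (1 - p) * f y + p * f (S y)).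
Proof.
  intros Hp [Hnn Hz]. split.
  - intro x. specialize (Hnn x) as A. specialize (Hnn (S x)) as B. nra.
  - intros x Hx. assert (A := Hnn x). assert (B := Hnn (S x)).
    assert (f x = 0) by nra. assert (f (S x) = 0) by nra.
    rewrite H0, (Hz _ H0). ring.
Qed.

Lemma E2_If p f x : 0 < p < 1 -> goodf f -> E2 p (f x) (f (S x)) <= p * If f x.
Proof.
  intros Hp [Hnn Hz].
  destruct (Req_dec (f x) 0) as [E0|N0].
  - rewrite E0, (Hz _ E0). unfold E2, If. rewrite E0, (Hz _ E0).
    replace ((1 - p) * 0 + p * 0) with 0 by ring.
    unfold Rdiv. rewrite Rinv_0. lra.
  - apply E2_le. lra. specialize (Hnn x); lra. apply Hnn.
Qed.

Theorem binom_mlsi p : 0 < p < 1 -> forall n f, goodf f ->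
  Ent p (S n) f <= INR (S n) * p * En p n (If f).
Proof.
  intros Hp n. induction n as [|n IH]; intros f Hf.
  - simpl. change (Ent p 1 f) with (E2 p (f 0%nat) (f 1%nat)).
    pose proof (E2_If p f 0 Hp Hf). lra.
  - rewrite Ent_chain.
    set (g := fun y => (1 - p) * f y + p * f (S y)).
    assert (Hg := good_step p f Hp Hf). fold g in Hg.
    specialize (IH g Hg).
    assert (A : En p (S n) (fun x => E2 p (f x) (f (S x))) <= En p (S n) (fun x => p * If f x)).
    { apply En_mono. lra. intro. apply E2_If; auto. }
    assert (B : En p n (If g) <= En p (S n) (If f)).
    { simpl. apply En_mono. lra. intro x. apply If_convex; auto. }
    assert (C : En p (S n) (fun x => p * If f x) = p * En p (S n) (If f)).
    { rewrite (En_ext p (S n) _ (fun x => p * If f x + 0 * If f x)) by (intro; ring).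
      rewrite En_lin. ring. }
    assert (0 <= En p (S n) (If f)).
    { rewrite <- (En_const p (S n) 0). apply En_mono. lra. intro; apply If_nonneg; auto. }
    assert (0 <= INR (S n)) by apply pos_INR.
    rewrite S_INR with (n := S n).
    assert (INR (S n) * p * En p n (If g) <= INR (S n) * p * En p (S n) (If f)).
    { apply Rmult_le_compat_l. nra. exact B. }
    lra.
Qed.

Definition dlt (k x : nat) : R := if Nat.eqb x k then 1 else 0.
Definition e (p : R) (n k : nat) : R := En p n (dlt k).

Lemma e_S p n k : e p (S n) k =
  (1 - p) * e p n k + p * (match k with O => 0 | S j => e p n j end).
Proof.
  unfold e. simpl. destruct k as [|j].
  - rewrite (En_ext p n _ (fun x => (1 - p) * dlt 0 x + p * (fun _ => 0) x)).
    + rewrite En_lin, En_const. ring.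
    + intro x. unfold dlt. simpl. reflexivity.
  - rewrite (En_ext p n _ (fun x => (1 - p) * dlt (S j) x + p * dlt j x)).
    + rewrite En_lin. ring.
    + intro x. unfold dlt. simpl. reflexivity.
Qed.

Lemma e_0 p n : e p n 0 = (1 - p) ^ n.
Proof.
  induction n as [|n IH].
  - reflexivity.
  - rewrite e_S, IH. simpl. ring.
Qed.

Lemma e_ratio p n : forall k,
  INR (S k) * (1 - p) * e p n (S k) = (INR n - INR k) * p * e p n k.
Proof.
  induction n as [|n IH]; intro k.
  - unfold e. simpl. unfold dlt. simpl. destruct k; simpl; ring.
  - destruct k as [|j].
    + rewrite (e_S p n 1), (e_S p n 0). pose proof (IH 0%nat) as H0.
      rewrite (S_INR n). change (INR 1) with 1 in *. change (INR 0) with 0 in *.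
      assert (Eq : 1 * (1 - p) * ((1 - p) * e p n 1 + p * e p n 0) -
        (INR n + 1 - 0) * p * ((1 - p) * e p n 0 + p * 0) =
        (1 - p) * (1 * (1 - p) * e p n 1 - (INR n - 0) * p * e p n 0)) by ring.
      rewrite H0, Rminus_diag, Rmult_0_r in Eq. lra.
    + rewrite (e_S p n (S (S j))), (e_S p n (S j)).
      pose proof (IH (S j)) as H1. pose proof (IH j) as H2.
      rewrite !S_INR in *.
      assert (Eq : (INR j + 1 + 1) * (1 - p) * ((1 - p) * e p n (S (S j)) + p * e p n (S j)) -
        (INR n + 1 - (INR j + 1)) * p * ((1 - p) * e p n (S j) + p * e p n j) =
        (1 - p) * ((INR j + 1 + 1) * (1 - p) * e p n (S (S j)) - (INR n - (INR j + 1)) * p * e p n (S j))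
        + p * ((INR j + 1) * (1 - p) * e p n (S j) - (INR n - INR j) * p * e p n j)) by ring.
      rewrite H1, H2, !Rminus_diag, !Rmult_0_r in Eq. lra.
Qed.

Lemma sum_dlt (h : nat -> R) N x :
  sum_f_R0 (fun k => h k * dlt k x) N = if Nat.leb x N then h x else 0.
Proof.
  induction N as [|N IH].
  - simpl. unfold dlt. destruct x; simpl; ring.
  - rewrite tech5, IH. unfold dlt.
    destruct (Nat.leb_spec x N); destruct (Nat.leb_spec x (S N));
    destruct (Nat.eqb_spec x (S N)); try lia; subst; ring.
Qed.

Lemma En_sum p n (c : nat -> R) (d : nat -> nat -> R) N :
  En p n (fun x => sum_f_R0 (fun k => c k * d k x) N) = sum_f_R0 (fun k => c k * En p n (d k)) N.
Proof.
  induction N as [|N IH].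
  - simpl. rewrite (En_ext p n _ (fun x => c 0%nat * d 0%nat x + 0 * d 0%nat x)) by (intro; ring).
    rewrite En_lin. ring.
  - simpl. rewrite (En_ext p n _ (fun x => 1 * sum_f_R0 (fun k => c k * d k x) N + c (S N) * d (S N) x))
      by (intro; ring).
    rewrite En_lin, IH. ring.
Qed.

Lemma En_fin p n h N : (forall x, (N < x)%nat -> h x = 0) ->
  En p n h = sum_f_R0 (fun k => e p n k * h k) N.
Proof.
  intros Hs.
  rewrite (En_ext p n h (fun x => sum_f_R0 (fun k => h k * dlt k x) N)).
  - rewrite En_sum. apply sum_eq. intros. unfold e. ring.
  - intro x. rewrite sum_dlt. destruct (Nat.leb_spec x N). reflexivity. rewrite Hs; [reflexivity|lia].
Qed.

Lemma lim_inv (u : nat -> R) (l : R) : is_lim_seq u l -> l <> 0 -> is_lim_seq (fun n => / u n) (/ l).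
Proof. intros H Hl. assert (Hl' : Finite l <> Finite 0) by (intro E; injection E; auto).
  exact (is_lim_seq_inv u (Finite l) H Hl'). Qed.

Lemma lim_mult (u v : nat -> R) (a b : R) : is_lim_seq u a -> is_lim_seq v b ->
  is_lim_seq (fun n => u n * v n) (a * b).
Proof. apply is_lim_seq_mult'. Qed.

Lemma lim_minus (u v : nat -> R) (a b : R) : is_lim_seq u a -> is_lim_seq v b ->
  is_lim_seq (fun n => u n - v n) (a - b).
Proof. apply is_lim_seq_minus'. Qed.

Lemma lim_plus (u v : nat -> R) (a b : R) : is_lim_seq u a -> is_lim_seq v b ->
  is_lim_seq (fun n => u n + v n) (a + b).
Proof. apply is_lim_seq_plus'. Qed.

Lemma lim_const (a : R) : is_lim_seq (fun _ => a) a.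
Proof. apply is_lim_seq_const. Qed.

Lemma lim_ext (u v : nat -> R) (l : R) : (forall n, u n = v n) -> is_lim_seq u l -> is_lim_seq v l.
Proof. apply is_lim_seq_ext. Qed.

Lemma lim_eq (u : nat -> R) (l l' : R) : l = l' -> is_lim_seq u l -> is_lim_seq u l'.
Proof. intros ->; auto. Qed.

Lemma ln_le_minus1 x : 0 < x -> ln x <= x - 1.
Proof. intros H. pose proof (exp_ineq1_le (ln x)). rewrite exp_ln in H0; lra. Qed.

Lemma e_lim (lam : R) (m : nat -> nat) (p : nat -> R) :
  (forall n, 0 < p n < 1) -> is_lim_seq (fun n => INR (m n) * p n) lam -> is_lim_seq p 0 ->
  forall k, is_lim_seq (fun n => e (p n) (m n) k) (poisson_pmf lam k).
Proof.
  intros Hp Hm H0 k. induction k as [|k IH].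
  - assert (Hw : is_lim_seq (fun n => 0 - INR (m n) * p n) (0 - lam)).
    { apply (lim_minus (fun _ => 0) (fun n => INR (m n) * p n)). apply lim_const. exact Hm. }
    assert (Hi : is_lim_seq (fun n => / (1 - p n)) (/ (1 - 0))).
    { apply lim_inv. apply (lim_minus (fun _ => 1) p). apply lim_const. exact H0. lra. }
    assert (Hv := lim_mult _ _ _ _ Hw Hi).
    assert (Hu : is_lim_seq (fun n => INR (m n) * ln (1 - p n)) (- lam)).
    { apply is_lim_seq_le_le with (u := fun n => (0 - INR (m n) * p n) * / (1 - p n))
        (w := fun n => 0 - INR (m n) * p n).
      - intro n. specialize (Hp n). assert (0 <= INR (m n)) by apply pos_INR.
        assert (A : ln (1 - p n) <= (1 - p n) - 1) by (apply ln_le_minus1; lra).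
        assert (B : ln (/ (1 - p n)) <= / (1 - p n) - 1) by (apply ln_le_minus1; apply Rinv_0_lt_compat; lra).
        rewrite ln_Rinv in B by lra.
        assert (C : / (1 - p n) - 1 = p n * / (1 - p n)) by (field; lra).
        split.
        + replace ((0 - INR (m n) * p n) * / (1 - p n)) with (- (INR (m n) * (p n * / (1 - p n)))) by ring.
          assert (INR (m n) * (- ln (1 - p n)) <= INR (m n) * (p n * / (1 - p n))).
          { apply Rmult_le_compat_l; lra. }
          replace (INR (m n) * - ln (1 - p n)) with (- (INR (m n) * ln (1 - p n))) in H1 by ring.
          lra.
        + assert (INR (m n) * ln (1 - p n) <= INR (m n) * (- p n)).
          { apply Rmult_le_compat_l; lra. }
          replace (INR (m n) * - p n) with (- (INR (m n) * p n)) in H1 by ring.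
          lra.
      - replace (Finite (-lam)) with (Finite ((0 - lam) * / (1 - 0))) by (f_equal; field). exact Hv.
      - replace (Finite (-lam)) with (Finite (0 - lam)) by (f_equal; ring). exact Hw. }
    assert (He := is_lim_seq_continuous exp _ _ (derivable_continuous_pt _ _ (derivable_pt_exp (-lam))) Hu).
    apply lim_eq with (exp (- lam)).
    { unfold poisson_pmf. simpl. field. }
    apply lim_ext with (2 := He). intro n. rewrite e_0. specialize (Hp n).
    rewrite <- Rpower_pow by lra. unfold Rpower. reflexivity.
  - assert (Hn : is_lim_seq (fun n => INR (m n) * p n - INR k * p n) (lam - INR k * 0)).
    { apply lim_minus; auto. apply lim_mult; auto using lim_const. }
    assert (Hd : is_lim_seq (fun n => / (INR (S k) * (1 - p n))) (/ (INR (S k) * (1 - 0)))).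
    { apply lim_inv. apply lim_mult. apply lim_const. apply lim_minus; auto using lim_const.
      assert (0 < INR (S k)) by apply lt_0_INR, Nat.lt_0_succ. nra. }
    assert (Hr := lim_mult _ _ _ _ (lim_mult _ _ _ _ Hn Hd) IH).
    apply lim_eq with ((lam - INR k * 0) * / (INR (S k) * (1 - 0)) * poisson_pmf lam k).
    { unfold poisson_pmf. change (Factorial.fact (S k)) with (S k * Factorial.fact k)%nat.
      rewrite mult_INR. simpl pow. field. split. apply INR_fact_neq_0.
      apply not_0_INR. discriminate. }
    apply lim_ext with (2 := Hr). intro n. specialize (Hp n).
    pose proof (e_ratio (p n) (m n) k) as R.
    assert (0 < INR (S k)) by apply lt_0_INR, Nat.lt_0_succ.
    apply Rmult_eq_reg_l with (INR (S k) * (1 - p n)). 2: nra.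
    rewrite <- Rmult_assoc, R. field. nra.
Qed.

Lemma sum_lim (a : nat -> nat -> R) (b h : nat -> R) N :
  (forall k, is_lim_seq (fun n => a n k) (b k)) ->
  is_lim_seq (fun n => sum_f_R0 (fun k => a n k * h k) N) (sum_f_R0 (fun k => b k * h k) N).
Proof.
  intros H. induction N as [|N IH].
  - simpl. apply (lim_mult (fun n => a n 0%nat) (fun _ => h 0%nat)). apply H. apply lim_const.
  - simpl. apply (lim_plus (fun n => sum_f_R0 (fun k => a n k * h k) N) (fun n => a n (S N) * h (S N))).
    exact IH. apply (lim_mult (fun n => a n (S N)) (fun _ => h (S N))). apply H. apply lim_const.
Qed.

Lemma sum_ge_first (a : nat -> R) N : (forall k, 0 <= a k) -> a 0%nat <= sum_f_R0 a N.
Proof.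
  intros H. induction N as [|N IH]; simpl. lra. specialize (H (S N)). lra.
Qed.

Lemma poisson_pos lam k : 0 < lam -> 0 < poisson_pmf lam k.
Proof.
  intros H. unfold poisson_pmf. apply Rdiv_lt_0_compat.
  apply Rmult_lt_0_compat. apply exp_pos. apply pow_lt, H.
  apply lt_0_INR. apply Factorial.lt_O_fact.
Qed.

Lemma exists_nat_gt (x : R) : exists c : nat, x < INR c.
Proof.
  destruct (archimed (Rabs x)) as [H _].
  exists (Z.to_nat (up (Rabs x))).
  rewrite INR_IZR_INZ, Z2Nat.id.
  - pose proof (Rle_abs x). lra.
  - apply le_IZR. pose proof (Rabs_pos x). lra.
Qed.

Theorem pois_mlsi (lam : R) (f : nat -> R) (N : nat) :
  0 < lam -> goodf f -> (forall x, (N < x)%nat -> f x = 0) -> 0 < f 0%nat ->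
  sum_f_R0 (fun k => poisson_pmf lam k * (f k * ln (f k))) N
   - sum_f_R0 (fun k => poisson_pmf lam k * f k) N * ln (sum_f_R0 (fun k => poisson_pmf lam k * f k) N)
   <= lam * sum_f_R0 (fun k => poisson_pmf lam k * If f k) N.
Proof.
  intros Hl Hg Hs Hf0.
  set (L := sum_f_R0 (fun k => poisson_pmf lam k * f k) N).
  assert (HL : 0 < L).
  { apply Rlt_le_trans with (poisson_pmf lam 0 * f 0%nat).
    apply Rmult_lt_0_compat; auto using poisson_pos.
    apply (sum_ge_first (fun k => poisson_pmf lam k * f k)).
    intro k. apply Rmult_le_pos. left; apply poisson_pos; auto. apply Hg. }
  destruct (exists_nat_gt lam) as [c Hc].
  set (p := fun n => lam / INR (S (n + c))).
  assert (Hpos : forall n, 0 < INR (S (n + c)) /\ lam < INR (S (n + c))).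
  { intro n. rewrite S_INR, plus_INR. pose proof (pos_INR n). lra. }
  assert (Hp : forall n, 0 < p n < 1).
  { intro n. destruct (Hpos n). unfold p. split. apply Rdiv_lt_0_compat; lra.
    apply Rmult_lt_reg_r with (INR (S (n + c))). lra. unfold Rdiv. rewrite Rmult_assoc, Rinv_l; lra. }
  assert (Hinf : is_lim_seq (fun n => INR (S (n + c))) p_infty).
  { apply is_lim_seq_ext with (fun n => INR (n + S c)).
    intro n. f_equal. lia. apply (is_lim_seq_incr_n INR (S c)). apply is_lim_seq_INR. }
  assert (Hinv : is_lim_seq (fun n => / INR (S (n + c))) 0).
  { apply (is_lim_seq_inv _ p_infty Hinf). discriminate. }
  assert (Hp0 : is_lim_seq p 0).
  { apply lim_eq with (lam * 0). ring. apply lim_ext with (fun n => lam * / INR (S (n + c))).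
    intro; unfold p; reflexivity. apply (lim_mult (fun _ => lam)). apply lim_const. exact Hinv. }
  assert (Hm1 : is_lim_seq (fun n => INR (S (n + c)) * p n) lam).
  { apply lim_ext with (fun _ => lam). intro n. unfold p. field. destruct (Hpos n); lra. apply lim_const. }
  assert (Hm2 : is_lim_seq (fun n => INR (n + c) * p n) lam).
  { apply lim_eq with (lam - 0). ring.
    apply lim_ext with (fun n => lam - p n).
    intro n. unfold p. destruct (Hpos n). rewrite S_INR in *. field. lra.
    apply (lim_minus (fun _ => lam)). apply lim_const. exact Hp0. }
  assert (E1 := e_lim lam (fun n => S (n + c)) p Hp Hm1 Hp0).
  assert (E2 := e_lim lam (fun n => (n + c)%nat) p Hp Hm2 Hp0).
  assert (S1 : forall x, (N < x)%nat -> f x * ln (f x) = 0) by (intros x Hx; rewrite Hs; auto; ring).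
  assert (S2 : forall x, (N < x)%nat -> If f x = 0).
  { intros x Hx. unfold If. rewrite (Hs x), (Hs (S x)) by lia. unfold Rdiv. ring. }
  assert (LA : is_lim_seq (fun n => En (p n) (S (n + c)) (fun x => f x * ln (f x)))
                 (sum_f_R0 (fun k => poisson_pmf lam k * (f k * ln (f k))) N)).
  { apply lim_ext with (fun n => sum_f_R0 (fun k => e (p n) (S (n + c)) k * (f k * ln (f k))) N).
    intro n. symmetry. apply En_fin. exact S1.
    apply (sum_lim (fun n k => e (p n) (S (n + c)) k)). exact E1. }
  assert (LB : is_lim_seq (fun n => En (p n) (S (n + c)) f) L).
  { apply lim_ext with (fun n => sum_f_R0 (fun k => e (p n) (S (n + c)) k * f k) N).
    intro n. symmetry. apply En_fin. exact Hs.
    apply (sum_lim (fun n k => e (p n) (S (n + c)) k)). exact E1. }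
  assert (LC : is_lim_seq (fun n => lam * En (p n) (n + c) (If f))
                 (lam * sum_f_R0 (fun k => poisson_pmf lam k * If f k) N)).
  { apply (lim_mult (fun _ => lam)). apply lim_const.
    apply lim_ext with (fun n => sum_f_R0 (fun k => e (p n) (n + c) k * If f k) N).
    intro n. symmetry. apply En_fin. exact S2.
    apply (sum_lim (fun n k => e (p n) (n + c) k)). exact E2. }
  assert (Hcl : continuity_pt ln L).
  { apply derivable_continuous_pt. exists (/ L). apply derivable_pt_lim_ln. exact HL. }
  assert (LD := is_lim_seq_continuous ln _ _ Hcl LB).
  assert (LE := lim_minus _ _ _ _ LA (lim_mult _ _ _ _ LB LD)).
  assert (Hle : forall n, Ent (p n) (S (n + c)) f <= lam * En (p n) (n + c) (If f)).
  { intro n. pose proof (binom_mlsi (p n) (Hp n) (n + c) f Hg) as B.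
    replace (INR (S (n + c)) * p n) with lam in B. exact B.
    unfold p. field. destruct (Hpos n); lra. }
  pose proof (is_lim_seq_le _ _ _ _ Hle LE LC) as R. simpl in R. exact R.
Qed.

Lemma ser_lim (a : nat -> R) (l : R) : is_series a l <-> is_lim_seq (fun N => sum_f_R0 a N) l.
Proof.
  split; intro H.
  - apply is_lim_seq_ext with (sum_n a). intro; apply sum_n_Reals. exact H.
  - assert (H' : is_lim_seq (sum_n a) l).
    { apply is_lim_seq_ext with (fun N => sum_f_R0 a N). intro; symmetry; apply sum_n_Reals. exact H. }
    exact H'.
Qed.

Lemma partial_le (a : nat -> R) (l : R) N : (forall k, 0 <= a k) -> is_series a l -> sum_f_R0 a N <= l.
Proof.
  intros Hn Hs. apply ser_lim in Hs.
  apply (is_lim_seq_incr_compare (fun N => sum_f_R0 a N) l Hs).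
  intro n. simpl. specialize (Hn (S n)). lra.
Qed.

Lemma poisson_S lam k : 0 < lam ->
  poisson_pmf lam (S k) = poisson_pmf lam k * lam / INR (S k).
Proof.
  intros H. unfold poisson_pmf. change (Factorial.fact (S k)) with (S k * Factorial.fact k)%nat.
  rewrite mult_INR. simpl pow. field. split. apply INR_fact_neq_0. apply not_0_INR. discriminate.
Qed.

Theorem proposition2 (P : nat -> R) (lam K : R) :
  (forall k, 0 <= P k) ->
  is_series P 1 ->
  is_series (fun k => INR k * P k) lam ->
  0 < lam ->
  ((forall k, 0 < P k) \/ (exists N : nat, forall k, (N < k)%nat -> P k = 0)) ->
  scaled_fisher_is P lam K ->
  ex_series (kl_term P lam) /\ Series (kl_term P lam) <= K.
Proof.
  intros Hnn HP1 _ Hl _ [Hz HK].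
  set (pi := poisson_pmf lam).
  assert (Hpi : forall k, 0 < pi k) by (intro; apply poisson_pos; auto).
  assert (Hzs : forall k, P k = 0 -> P (S k) = 0).
  { intros k Hk. specialize (Hz k Hk). unfold fisher_num in Hz. rewrite Hk in Hz.
    assert (0 < INR (S k)) by apply lt_0_INR, Nat.lt_0_succ.
    apply Rmult_eq_reg_l with (INR (S k) / lam). 2: { apply Rgt_not_eq. apply Rdiv_lt_0_compat; lra. }
    unfold Rdiv in *. rewrite Rmult_0_r. lra. }
  assert (HP0 : 0 < P 0%nat).
  { destruct (Req_dec (P 0%nat) 0) as [E|E]. 2: { specialize (Hnn 0%nat). lra. }
    exfalso. assert (Z : forall k, P k = 0) by (induction k; auto).
    apply ser_lim in HP1.
    assert (Z' : is_lim_seq (fun N => sum_f_R0 P N) 0).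
    { apply lim_ext with (fun _ => 0). intro N. induction N; simpl; rewrite ?IHN, Z; ring. apply lim_const. }
    apply is_lim_seq_unique in HP1. apply is_lim_seq_unique in Z'. rewrite HP1 in Z'.
    injection Z'. lra. }
  assert (HKt : forall k, 0 <= lam * (fisher_num P lam k ^ 2 / P k)).
  { intro k. apply Rmult_le_pos. lra. apply sq_div_nonneg, Hnn. }
  assert (Bnd : forall N, sum_f_R0 (kl_term P lam) N <= K + lam * P N).
  { intro N.
    set (f := fun x => if Nat.leb x N then P x / pi x else 0).
    assert (Hf : goodf f).
    { split.
      - intro x. unfold f. destruct (Nat.leb x N). apply Rdiv_le_0_compat; auto. lra.
      - intros x Hx. unfold f in *. destruct (Nat.leb_spec (S x) N). 
        + destruct (Nat.leb_spec x N); [|lia].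
          assert (P x = 0).
          { apply Rmult_eq_reg_r with (/ pi x). rewrite Rmult_0_l. exact Hx.
            apply Rinv_neq_0_compat. specialize (Hpi x). lra. }
          rewrite Hzs; auto. unfold Rdiv; ring.
        + reflexivity. }
    assert (Hsup : forall x, (N < x)%nat -> f x = 0).
    { intros x Hx. unfold f. destruct (Nat.leb_spec x N). lia. reflexivity. }
    assert (Hf0 : 0 < f 0%nat).
    { unfold f. simpl. apply Rdiv_lt_0_compat; auto. }
    pose proof (pois_mlsi lam f N Hl Hf Hsup Hf0) as MM. fold pi in MM.
    set (L := sum_f_R0 (fun k => pi k * f k) N) in MM.
    assert (EL : L = sum_f_R0 P N).
    { unfold L. apply sum_eq. intros i Hi. unfold f. destruct (Nat.leb_spec i N); [|lia].
      field. specialize (Hpi i). lra. }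
    assert (EK : sum_f_R0 (fun k => pi k * (f k * ln (f k))) N = sum_f_R0 (kl_term P lam) N).
    { apply sum_eq. intros i Hi. unfold f, kl_term. destruct (Nat.leb_spec i N); [|lia].
      fold pi. field. specialize (Hpi i). lra. }
    assert (HL1 : L <= 1).
    { rewrite EL. apply partial_le; auto. }
    assert (HL0 : 0 < L).
    { rewrite EL. apply Rlt_le_trans with (P 0%nat). auto. apply sum_ge_first. auto. }
    assert (LnL : L * ln L <= 0).
    { assert (ln L <= 0). { rewrite <- ln_1. apply ln_le; lra. } nra. }
    assert (Term : forall k, (k < N)%nat -> lam * (pi k * If f k) = lam * (fisher_num P lam k ^ 2 / P k)).
    { intros k Hk. f_equal. unfold If, f, fisher_num.
      destruct (Nat.leb_spec k N); [|lia]. destruct (Nat.leb_spec (S k) N); [|lia].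
      unfold pi. rewrite poisson_S by auto. fold pi.
      assert (0 < INR (S k)) by apply lt_0_INR, Nat.lt_0_succ.
      specialize (Hpi k).
      destruct (Req_dec (P k) 0) as [E|E].
      - rewrite E, (Hzs k E). unfold Rdiv. rewrite !Rmult_0_l, Rinv_0. ring.
      - field. repeat split; lra. }
    assert (Last : lam * (pi N * If f N) <= lam * P N).
    { apply Rmult_le_compat_l. lra. unfold If, f.
      destruct (Nat.leb_spec (S N) N); [lia|]. destruct (Nat.leb_spec N N); [|lia].
      specialize (Hpi N). destruct (Req_dec (P N) 0) as [E|E].
      - rewrite E. unfold Rdiv. rewrite Rmult_0_l, Rinv_0. rewrite !Rmult_0_r. lra.
      - right. field. split; lra. }
    assert (RB : lam * sum_f_R0 (fun k => pi k * If f k) N <= K + lam * P N).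
    { rewrite scal_sum. destruct N as [|M].
      - simpl. simpl in Last. assert (0 <= K).
        { apply Rle_trans with (sum_f_R0 (fun k => lam * (fisher_num P lam k ^ 2 / P k)) 0).
          simpl. apply HKt. apply partial_le; auto. }
        rewrite Rmult_comm. lra.
      - rewrite tech5.
        assert (sum_f_R0 (fun i => pi i * If f i * lam) M = sum_f_R0 (fun k => lam * (fisher_num P lam k ^ 2 / P k)) M).
        { apply sum_eq. intros i Hi. rewrite <- Term by lia. ring. }
        assert (sum_f_R0 (fun k => lam * (fisher_num P lam k ^ 2 / P k)) M <= K) by (apply partial_le; auto).
        rewrite Rmult_comm in Last. lra. }
    lra. }
  assert (Hpis : is_series pi 1).
  { pose proof (is_exp_Reals lam) as E. unfold is_pseries in E.
    apply (is_series_scal_l (exp (- lam))) in E.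
    replace 1 with (scal (exp (- lam)) (exp lam)).
    2:{ rewrite <- exp_plus. replace (- lam + lam) with 0 by ring. apply exp_0. }
    apply is_series_ext with (2 := E). intro n. unfold pi, poisson_pmf, scal. simpl.
    unfold mult. simpl. rewrite pow_n_pow. unfold Rdiv. ring. }
  set (A := fun k => kl_term P lam k - P k + pi k).
  assert (HA : forall k, 0 <= A k).
  { intro k. unfold A, kl_term. fold pi. specialize (Hpi k). specialize (Hnn k).
    destruct (Req_dec (P k) 0) as [E|E].
    - rewrite E. lra.
    - assert (ln (pi k / P k) <= pi k / P k - 1) by (apply ln_le_minus1; apply Rdiv_lt_0_compat; lra).
      unfold Rdiv in *. rewrite ln_mult, ln_Rinv in * by (try apply Rinv_0_lt_compat; lra).
      assert (P k * (ln (pi k) + - ln (P k)) <= P k * (pi k * / P k - 1)) by (apply Rmult_le_compat_l; lra).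
      replace (P k * (pi k * / P k - 1)) with (pi k - P k) in H0 by (field; lra).
      lra. }
  assert (HAex : ex_series A).
  { assert (F : ex_finite_lim_seq (fun N => sum_f_R0 A N)).
    { apply ex_finite_lim_seq_incr with (K + lam * 1 + 1).
      - intro n. simpl. specialize (HA (S n)). lra.
      - intro N. assert (EA : sum_f_R0 A N = sum_f_R0 (kl_term P lam) N - sum_f_R0 P N + sum_f_R0 pi N).
        { unfold A. rewrite <- minus_sum, <- sum_plus. reflexivity. }
        rewrite EA.
        assert (sum_f_R0 pi N <= 1) by (apply partial_le; auto; intro; left; auto).
        assert (0 <= sum_f_R0 P N) by (apply Rle_trans with (P 0%nat); auto; apply sum_ge_first; auto).
        assert (P N <= 1).
        { apply Rle_trans with (sum_f_R0 P N). destruct N. simpl; lra. rewrite tech5.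
          assert (0 <= sum_f_R0 P N). apply Rle_trans with (P 0%nat); auto; apply sum_ge_first; auto. lra.
          apply partial_le; auto. }
        specialize (Bnd N). nra. }
    destruct F as [l Hl']. exists l. apply ser_lim. exact Hl'. }
  assert (Hex : ex_series (kl_term P lam)).
  { assert (E : ex_series (fun k => A k + (P k - pi k))).
    { apply (ex_series_plus A (fun k => P k - pi k)). exact HAex.
      apply (ex_series_minus P pi). exists 1; auto. exists 1; auto. }
    assert (EE : forall k, A k + (P k - pi k) = kl_term P lam k) by (intro; unfold A; ring).
    exact (ex_series_ext _ _ EE E). }
  split. exact Hex.
  pose proof (Series_correct _ Hex) as S. apply ser_lim in S.
  assert (HPl : is_lim_seq (fun N => K + lam * P N) (K + lam * 0)).
  { apply (lim_plus (fun _ => K)). apply lim_const. apply (lim_mult (fun _ => lam)). apply lim_const.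
    apply ex_series_lim_0. exists 1; auto. }
  pose proof (is_lim_seq_le _ _ _ _ Bnd S HPl) as R. simpl in R. lra.
Qed.
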